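(* Let $a,b>0$, $D=[0,a]\times[0,b]$, and let $f:D\to\mathbb{R}$ be a $C^3$ function. Let $p\in\operatorname{int}D$ be a saddle point of $f$, i.e. a stationary point at which the determinant of the Hessian of $f$ is negative. Then there exist a neighborhood $U$ of $p$ and a number $r>0$ such that for every sufficiently large $n$, every grid vertex $p_{i,j}$ of $D_n$ lying in $U$ is neither minimal nor maximal within its grid circle $C_r(p_{i,j})$.
   Context: For $n\ge1$, $D_n$ denotes the division of $D$ into $n\times n$ congruent rectangles; its grid vertices are the points $p_{i,j}=\left(\frac{i}{n}a,\frac{j}{n}b\right)$, $0\le i,j\le n$. The grid circle of centre $p_{i,j}$ and radius $r$ is $C_r(p_{i,j})=\{p_{l,m}: 0\le l,m\le n,\ \max\{|l-i|,|m-j|\}\le r\}$. A grid vertex $p_{i,j}$ is minimal (resp. maximal) within $C_r(p_{i,j})$ if $f(p_{i,j})\le f(q)$ (resp. $f(p_{i,j})\ge f(q)$) for every $q\in C_r(p_{i,j})$. *)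

(* Defs.v *)
From Stdlib Require Import Reals Lra.
Open Scope R_scope.

Definition cont2_at (g : R -> R -> R) (x y : R) : Prop :=
  forall eps, 0 < eps -> exists d, 0 < d /\
    forall u v, Rabs (u - x) < d -> Rabs (v - y) < d ->
      Rabs (g u v - g x y) < eps.

(* C^k on a set S (intended: an open set) : all partial derivatives of order
   <= k exist on S and are jointly continuous on S. *)
Fixpoint Ck (k : nat) (S : R -> R -> Prop) (f : R -> R -> R) : Prop :=
  match k with
  | O => forall x y, S x y -> cont2_at f x y
  | S k' => (forall x y, S x y -> cont2_at f x y) /\
      exists fx fy : R -> R -> R,
        (forall x y, S x y -> derivable_pt_lim (fun t => f t y) x (fx x y)) /\
        (forall x y, S x y -> derivable_pt_lim (fun t => f x t) y (fy x y)) /\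
        Ck k' S fx /\ Ck k' S fy
  end.

Definition interiorD (a b : R) (x y : R) : Prop := 0 < x < a /\ 0 < y < b.

Definition gridx (a : R) (n i : nat) : R := INR i / INR n * a.
Definition gridy (b : R) (n j : nat) : R := INR j / INR n * b.

Definition in_grid_circle (n : nat) (r : R) (i j l m : nat) : Prop :=
  (l <= n)%nat /\ (m <= n)%nat /\
  Rmax (Rabs (INR l - INR i)) (Rabs (INR m - INR j)) <= r.

Definition grid_minimal (a b : R) (f : R -> R -> R) (n : nat) (r : R) (i j : nat) : Prop :=
  forall l m, in_grid_circle n r i j l m ->
    f (gridx a n i) (gridy b n j) <= f (gridx a n l) (gridy b n m).

Definition grid_maximal (a b : R) (f : R -> R -> R) (n : nat) (r : R) (i j : nat) : Prop :=
  forall l m, in_grid_circle n r i j l m ->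
    f (gridx a n i) (gridy b n j) >= f (gridx a n l) (gridy b n m).

Definition nbhd (U : R -> R -> Prop) (p1 p2 : R) : Prop :=
  exists d, 0 < d /\ forall x y, Rabs (x - p1) < d -> Rabs (y - p2) < d -> U x y.

(* Main.v *)
Require Import Defs.
From Stdlib Require Import Reals Lra Lia ZArith.
Open Scope R_scope.

Lemma dpl_ext (f g : R -> R) x l :
  (forall y, f y = g y) -> derivable_pt_lim f x l -> derivable_pt_lim g x l.
Proof.
  intros H D eps He. destruct (D eps He) as [d Hd]. exists d. intros h H1 H2.
  rewrite <- !H. apply Hd; auto.
Qed.

Lemma dpl_affine (phi : R -> R) (phi' : R) c d w :
  derivable_pt_lim phi (c + d * w) phi' ->
  derivable_pt_lim (fun z => phi (c + d * z)) w (d * phi').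
Proof.
  intros H.
  assert (H1 : derivable_pt_lim (fun z => c + d * z) w d).
  { pose proof (derivable_pt_lim_plus (fct_cte c) (mult_real_fct d id) w 0 (d*1)
      (derivable_pt_lim_const c w) (derivable_pt_lim_scal id d w 1 (derivable_pt_lim_id w))) as H0.
    replace (0 + d * 1) with d in H0 by ring.
    eapply dpl_ext; [|exact H0]. intros; unfold plus_fct, fct_cte, mult_real_fct, id; reflexivity. }
  rewrite Rmult_comm.
  apply (derivable_pt_lim_comp (fun z => c + d * z) phi w d phi'); auto.
Qed.

Lemma Rabs_le_between x r : Rabs x <= r -> - r <= x <= r.
Proof. unfold Rabs; destruct (Rcase_abs x); lra. Qed.
Lemma Rabs_le x r : - r <= x <= r -> Rabs x <= r.
Proof. unfold Rabs; destruct (Rcase_abs x); lra. Qed.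

Lemma L_bound (h h' : R -> R) m rho c e K :
  (forall u, Rabs (u - m) <= rho -> derivable_pt_lim h u (h' u)) ->
  (forall u, Rabs (u - m) <= rho -> Rabs (h' u) <= K) ->
  Rabs (c - m) <= rho -> Rabs (e - m) <= rho ->
  Rabs (h e - h c) <= K * Rabs (e - c).
Proof.
  intros Hd Hb Hc He.
  assert (K0 : 0 <= K) by (specialize (Hb c Hc); pose proof (Rabs_pos (h' c)); lra).
  destruct (Rtotal_order c e) as [Hlt|[Heq|Hgt]].
  - destruct (MVT_cor2 h h' c e Hlt) as [z [Hz1 Hz2]].
    { intros z Hz. apply Hd. apply Rabs_le. apply Rabs_le_between in Hc.
      apply Rabs_le_between in He. lra. }
    rewrite Hz1, Rabs_mult. apply Rmult_le_compat_r; [apply Rabs_pos|].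
    apply Hb. apply Rabs_le. apply Rabs_le_between in Hc.
      apply Rabs_le_between in He. lra.
  - subst. replace (h e - h e) with 0 by ring. rewrite Rabs_R0.
    apply Rmult_le_pos; auto; apply Rabs_pos.
  - destruct (MVT_cor2 h h' e c Hgt) as [z [Hz1 Hz2]].
    { intros z Hz. apply Hd. apply Rabs_le. apply Rabs_le_between in Hc.
      apply Rabs_le_between in He. lra. }
    replace (h e - h c) with (- (h c - h e)) by ring.
    replace (e - c) with (- (c - e)) by ring.
    rewrite !Rabs_Ropp, Hz1, Rabs_mult. apply Rmult_le_compat_r; [apply Rabs_pos|].
    apply Hb. apply Rabs_le. apply Rabs_le_between in Hc.
      apply Rabs_le_between in He. lra.
Qed.

Lemma dpl_plus' (f g : R -> R) x l1 l2 :
  derivable_pt_lim f x l1 -> derivable_pt_lim g x l2 ->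
  derivable_pt_lim (fun z => f z + g z) x (l1 + l2).
Proof. intros; eapply dpl_ext; [|apply derivable_pt_lim_plus; eauto]. intros; reflexivity. Qed.
Lemma dpl_minus' (f g : R -> R) x l1 l2 :
  derivable_pt_lim f x l1 -> derivable_pt_lim g x l2 ->
  derivable_pt_lim (fun z => f z - g z) x (l1 - l2).
Proof. intros; eapply dpl_ext; [|apply derivable_pt_lim_minus; eauto]. intros; reflexivity. Qed.
Lemma dpl_lin A x : derivable_pt_lim (fun z => A * z) x A.
Proof.
  pose proof (dpl_affine id 1 0 A x (derivable_pt_lim_id _)) as H.
  replace (A * 1) with A in H by ring. eapply dpl_ext; [|exact H].
  intros; unfold id; ring.
Qed.
Lemma dpl_sq A x : derivable_pt_lim (fun z => A * z^2) x (2 * A * x).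
Proof.
  pose proof (derivable_pt_lim_mult id id x 1 1 (derivable_pt_lim_id _) (derivable_pt_lim_id _)) as H.
  pose proof (derivable_pt_lim_scal _ A x _ H) as H2.
  eapply dpl_ext; [|replace (2*A*x) with (A * (1 * id x + id x * 1)) by (unfold id; ring); exact H2].
  intros; unfold mult_real_fct, mult_fct, id; ring.
Qed.

Lemma sx_bound (phi phi' phi'' : R -> R) x s A eps :
  (forall u, Rabs (u - x) <= Rabs s -> derivable_pt_lim phi u (phi' u) /\
     derivable_pt_lim phi' u (phi'' u) /\ Rabs (phi'' u - A) <= eps) ->
  Rabs (phi (x + s) + phi (x - s) - 2 * phi x - A * s^2) <= 2 * eps * s^2.
Proof.
  intros H.
  assert (S1 : forall w, Rabs w <= Rabs s ->
     Rabs (phi' (x + w) - phi' (x - w) - 2 * A * w) <= 2 * eps * Rabs w).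
  { intros w Hw.
    pose proof (L_bound (fun u => phi' u - A * u) (fun u => phi'' u - A) x (Rabs s)
       (x - w) (x + w) eps) as L.
    replace (phi' (x + w) - phi' (x - w) - 2 * A * w) with
      ((phi' (x + w) - A * (x + w)) - (phi' (x - w) - A * (x - w))) by ring.
    replace (2 * eps * Rabs w) with (eps * Rabs (x + w - (x - w))).
    2:{ replace (x + w - (x - w)) with (2 * w) by ring. rewrite Rabs_mult, Rabs_right by lra. ring. }
    apply L.
    - intros u Hu. apply dpl_minus'. apply (H u Hu). apply dpl_lin.
    - intros u Hu. apply (H u Hu).
    - replace (x - w - x) with (- w) by ring. rewrite Rabs_Ropp; auto.
    - replace (x + w - x) with w by ring. auto. }
  pose proof (L_bound (fun w => phi (x + 1 * w) + phi (x + -1 * w) - A * w^2)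
     (fun w => phi' (x + w) - phi' (x - w) - 2 * A * w) 0 (Rabs s) 0 s (2 * eps * Rabs s)) as L.
  replace (phi (x + s) + phi (x - s) - 2 * phi x - A * s ^ 2) with
    ((phi (x + 1 * s) + phi (x + -1 * s) - A * s^2) - (phi (x + 1 * 0) + phi (x + -1 * 0) - A * 0^2))
    by (replace (x + 1 * s) with (x + s) by ring; replace (x + -1 * s) with (x - s) by ring;
        replace (x + 1 * 0) with x by ring; replace (x + -1 * 0) with x by ring; ring).
  replace (2 * eps * s^2) with (2 * eps * Rabs s * Rabs (s - 0)).
  2:{ rewrite Rminus_0_r. rewrite Rmult_assoc, <- Rabs_mult. rewrite Rabs_right. ring.
      replace (s * s) with (s^2) by ring. apply Rle_ge, pow2_ge_0. }
  apply L.
  - intros w Hw. rewrite Rminus_0_r in Hw.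
    replace (phi' (x + w) - phi' (x - w) - 2 * A * w) with
      (1 * phi' (x + 1 * w) + -1 * phi' (x + -1 * w) - 2 * A * w)
      by (replace (x + 1 * w) with (x + w) by ring; replace (x + -1 * w) with (x - w) by ring; ring).
    apply dpl_minus'; [apply dpl_plus'|apply dpl_sq].
    + apply dpl_affine. apply H. replace (x + 1 * w - x) with w by ring; auto.
    + apply dpl_affine. apply H. replace (x + -1 * w - x) with (- w) by ring; rewrite Rabs_Ropp; auto.
  - intros w Hw. rewrite Rminus_0_r in Hw. eapply Rle_trans. apply S1; auto.
    assert (0 <= eps). { specialize (H x). rewrite Rminus_diag, Rabs_R0 in H.
      destruct (H (Rabs_pos s)) as [_ [_ Hh]]. pose proof (Rabs_pos (phi'' x - A)). lra. }
    apply Rmult_le_compat_l; lra.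
  - rewrite Rminus_0_r, Rabs_R0. apply Rabs_pos.
  - rewrite Rminus_0_r. lra.
Qed.

Lemma mixed_bound (f fx fxy : R -> R -> R) x y s t B eps :
  (forall u v, Rabs (u - x) <= Rabs s -> Rabs (v - y) <= Rabs t ->
    derivable_pt_lim (fun z => f z v) u (fx u v) /\
    derivable_pt_lim (fun z => fx u z) v (fxy u v) /\ Rabs (fxy u v - B) <= eps) ->
  Rabs (f (x + s) (y + t) - f (x + s) y - f x (y + t) + f x y - B * s * t)
    <= eps * Rabs s * Rabs t.
Proof.
  intros H.
  assert (Hy0 : Rabs (y - y) <= Rabs t) by (rewrite Rminus_diag, Rabs_R0; apply Rabs_pos).
  assert (Hyt : Rabs (y + t - y) <= Rabs t) by (replace (y + t - y) with t by ring; lra).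
  assert (S1 : forall u, Rabs (u - x) <= Rabs s ->
     Rabs (fx u (y + t) - fx u y - B * t) <= eps * Rabs t).
  { intros u Hu.
    pose proof (L_bound (fun v => fx u v - B * v) (fun v => fxy u v - B) y (Rabs t) y (y + t) eps) as L.
    replace (fx u (y + t) - fx u y - B * t) with ((fx u (y + t) - B * (y + t)) - (fx u y - B * y)) by ring.
    replace (eps * Rabs t) with (eps * Rabs (y + t - y)) by (replace (y + t - y) with t by ring; ring).
    apply L; auto.
    - intros v Hv. apply dpl_minus'. apply (H u v Hu Hv). apply dpl_lin.
    - intros v Hv. apply (H u v Hu Hv). }
  pose proof (L_bound (fun u => f u (y + t) - f u y - (B * t) * u) (fun u => fx u (y + t) - fx u y - B * t)
     x (Rabs s) x (x + s) (eps * Rabs t)) as L.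
  replace (f (x + s) (y + t) - f (x + s) y - f x (y + t) + f x y - B * s * t) with
    ((f (x + s) (y + t) - f (x + s) y - (B * t) * (x + s)) - (f x (y + t) - f x y - (B * t) * x)) by ring.
  replace (eps * Rabs s * Rabs t) with (eps * Rabs t * Rabs (x + s - x))
    by (replace (x + s - x) with s by ring; ring).
  apply L.
  - intros u Hu. apply dpl_minus'; [apply dpl_minus'|apply dpl_lin].
    apply (H u (y + t) Hu Hyt). apply (H u y Hu Hy0).
  - exact S1.
  - rewrite Rminus_diag, Rabs_R0; apply Rabs_pos.
  - replace (x + s - x) with s by ring; lra.
Qed.

Lemma second_diff (f fx fy fxx fxy fyx fyy : R -> R -> R) A B C D eps x y s t :
 (forall u v, Rabs (u - x) <= Rabs s -> Rabs (v - y) <= Rabs t ->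
   derivable_pt_lim (fun z => f z v) u (fx u v) /\ derivable_pt_lim (fun z => f u z) v (fy u v) /\
   derivable_pt_lim (fun z => fx z v) u (fxx u v) /\ derivable_pt_lim (fun z => fx u z) v (fxy u v) /\
   derivable_pt_lim (fun z => fy z v) u (fyx u v) /\ derivable_pt_lim (fun z => fy u z) v (fyy u v) /\
   Rabs (fxx u v - A) <= eps /\ Rabs (fxy u v - B) <= eps /\
   Rabs (fyx u v - C) <= eps /\ Rabs (fyy u v - D) <= eps) ->
 Rabs (f (x + s) (y + t) + f (x - s) (y - t) - 2 * f x y - (A * s^2 + (B + C) * s * t + D * t^2))
   <= 3 * eps * (s^2 + t^2).
Proof.
  intros H.
  assert (Hx0 : Rabs (x - x) <= Rabs s) by (rewrite Rminus_diag, Rabs_R0; apply Rabs_pos).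
  assert (Hy0 : Rabs (y - y) <= Rabs t) by (rewrite Rminus_diag, Rabs_R0; apply Rabs_pos).
  assert (He : 0 <= eps).
  { destruct (H x y Hx0 Hy0) as [_ [_ [_ [_ [_ [_ [Hh _]]]]]]].
    pose proof (Rabs_pos (fxx x y - A)); lra. }
  pose proof (sx_bound (fun z => f z y) (fun z => fx z y) (fun z => fxx z y) x s A eps) as Sx.
  pose proof (sx_bound (fun z => f x z) (fun z => fy x z) (fun z => fyy x z) y t D eps) as Sy.
  pose proof (mixed_bound f fx fxy x y s t B eps) as M1.
  pose proof (mixed_bound f fx fxy x y (- s) (- t) B eps) as M2.
  pose proof (mixed_bound (fun v u => f u v) (fun v u => fy u v) (fun v u => fyx u v) y x t s C eps) as M3.
  pose proof (mixed_bound (fun v u => f u v) (fun v u => fy u v) (fun v u => fyx u v) y x (- t) (- s) C eps) as M4.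
  simpl in Sx, Sy, M1, M2, M3, M4.
  rewrite !Rabs_Ropp in M2, M4.
  specialize (Sx ltac:(intros u Hu; destruct (H u y Hu Hy0) as [? [? [? [? [? [? [? ?]]]]]]]; auto)).
  specialize (Sy ltac:(intros u Hu; destruct (H x u Hx0 Hu) as [? [? [? [? [? [? [? [? [? ?]]]]]]]]]; auto)).
  specialize (M1 ltac:(intros u v Hu Hv; destruct (H u v Hu Hv) as [? [? [? [? [? [? [? [? ?]]]]]]]]; auto)).
  specialize (M2 ltac:(intros u v Hu Hv; destruct (H u v Hu Hv) as [? [? [? [? [? [? [? [? ?]]]]]]]]; auto)).
  specialize (M3 ltac:(intros u v Hu Hv; destruct (H v u Hv Hu) as [? [? [? [? [? [? [? [? [? ?]]]]]]]]]; auto)).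
  specialize (M4 ltac:(intros u v Hu Hv; destruct (H v u Hv Hu) as [? [? [? [? [? [? [? [? [? ?]]]]]]]]]; auto)).
  replace (x + - s) with (x - s) in M2 by ring. replace (y + - t) with (y - t) in M2 by ring.
  replace (x + - s) with (x - s) in M4 by ring. replace (y + - t) with (y - t) in M4 by ring.
  assert (HP : 2 * (eps * Rabs s * Rabs t) <= eps * (s^2 + t^2)).
  { replace (s^2) with (Rabs s * Rabs s) by (rewrite <- Rabs_mult; rewrite Rabs_right; [ring|];
       apply Rle_ge; replace (s * s) with (s^2) by ring; apply pow2_ge_0).
    replace (t^2) with (Rabs t * Rabs t) by (rewrite <- Rabs_mult; rewrite Rabs_right; [ring|];
       apply Rle_ge; replace (t * t) with (t^2) by ring; apply pow2_ge_0).
    pose proof (pow2_ge_0 (Rabs s - Rabs t)). nra. }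
  apply Rabs_le_between in Sx. apply Rabs_le_between in Sy.
  apply Rabs_le_between in M1. apply Rabs_le_between in M2.
  apply Rabs_le_between in M3. apply Rabs_le_between in M4.
  apply Rabs_le. split; lra.
Qed.

Definition Qf (al be ga x y : R) := al * x^2 + be * x * y + ga * y^2.

Lemma mul_small p e : Rabs e <= 1 -> Rabs (p * e) <= Rabs p.
Proof.
  intros H. rewrite Rabs_mult. pose proof (Rabs_pos p). pose proof (Rabs_pos e). nra.
Qed.

Lemma approx al be ga u v : Qf al be ga u v > 0 ->
  exists k l : Z, Qf al be ga (IZR k) (IZR l) > 0.
Proof.
  intros Hc. set (c := Qf al be ga u v) in *.
  set (K1 := 2 * Rabs al * Rabs u + Rabs be * (Rabs u + Rabs v) + 2 * Rabs ga * Rabs v).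
  set (K2 := Rabs al + Rabs be + Rabs ga).
  destruct (archimed ((K1 + K2) / c + 1)) as [HL _].
  set (L := IZR (up ((K1 + K2) / c + 1))) in *.
  destruct (archimed (L * u)) as [Hk1 Hk2]. destruct (archimed (L * v)) as [Hl1 Hl2].
  exists (up (L * u)), (up (L * v)).
  set (e := IZR (up (L * u)) - L * u) in *. set (f := IZR (up (L * v)) - L * v) in *.
  assert (Ee : IZR (up (L * u)) = L * u + e) by (unfold e; ring).
  assert (Ef : IZR (up (L * v)) = L * v + f) by (unfold f; ring).
  rewrite Ee, Ef.
  assert (He : Rabs e <= 1) by (apply Rabs_le; lra).
  assert (Hf : Rabs f <= 1) by (apply Rabs_le; lra).
  assert (Hid : Qf al be ga (L * u + e) (L * v + f) =
     L * L * c + L * (2 * al * u * e + be * (u * f + v * e) + 2 * ga * v * f)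
       + (al * e * e + be * e * f + ga * f * f)) by (unfold c, Qf; ring).
  rewrite Hid.
  assert (HK1 : - K1 <= 2 * al * u * e + be * (u * f + v * e) + 2 * ga * v * f).
  { pose proof (mul_small (2 * al * u) e He) as T1.
    pose proof (mul_small (be * u) f Hf) as T2.
    pose proof (mul_small (be * v) e He) as T3.
    pose proof (mul_small (2 * ga * v) f Hf) as T4.
    assert (Rabs (2 * al * u) = 2 * Rabs al * Rabs u) by
      (rewrite !Rabs_mult, (Rabs_right 2) by lra; ring).
    assert (Rabs (2 * ga * v) = 2 * Rabs ga * Rabs v) by
      (rewrite !Rabs_mult, (Rabs_right 2) by lra; ring).
    assert (Rabs (be * u) = Rabs be * Rabs u) by apply Rabs_mult.
    assert (Rabs (be * v) = Rabs be * Rabs v) by apply Rabs_mult.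
    apply Rabs_le_between in T1. apply Rabs_le_between in T2.
    apply Rabs_le_between in T3. apply Rabs_le_between in T4.
    unfold K1. lra. }
  assert (HK2 : - K2 <= al * e * e + be * e * f + ga * f * f).
  { pose proof (mul_small al e He) as T1. pose proof (mul_small (al * e) e He) as T1'.
    pose proof (mul_small be e He) as T2. pose proof (mul_small (be * e) f Hf) as T2'.
    pose proof (mul_small ga f Hf) as T3. pose proof (mul_small (ga * f) f Hf) as T3'.
    apply Rabs_le_between in T1'. apply Rabs_le_between in T2'. apply Rabs_le_between in T3'.
    unfold K2. lra. }
  assert (K1p : 0 <= K1) by (unfold K1; pose proof (Rabs_pos al); pose proof (Rabs_pos be);
     pose proof (Rabs_pos ga); pose proof (Rabs_pos u); pose proof (Rabs_pos v);
     apply Rplus_le_le_0_compat; [apply Rplus_le_le_0_compat|]; nra).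
  assert (K2p : 0 <= K2) by (unfold K2; pose proof (Rabs_pos al); pose proof (Rabs_pos be);
     pose proof (Rabs_pos ga); lra).
  assert (HLc : L * c > K1 + K2 + c).
  { assert (HL' : L > (K1 + K2) / c + 1) by exact HL.
    apply Rmult_gt_compat_r with (r := c) in HL'; [|lra].
    replace (((K1 + K2) / c + 1) * c) with (K1 + K2 + c) in HL' by (field; lra). lra. }
  assert (L > 1).
  { assert (0 <= (K1 + K2) / c) by (apply Rle_mult_inv_pos; lra). lra. }
  nra.
Qed.

Lemma real_witness al be ga : be^2 - 4 * al * ga > 0 -> exists u v, Qf al be ga u v > 0.
Proof.
  intros H. destruct (Rtotal_order al 0) as [Hn|[Hz|Hp]].
  - exists (- be), (2 * al). unfold Qf.
    replace (al * (- be)^2 + be * (- be) * (2 * al) + ga * (2 * al)^2)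
      with ((- al) * (be^2 - 4 * al * ga)) by ring.
    apply Rmult_lt_0_compat; lra.
  - subst. assert (be <> 0) by (intro; subst; lra).
    exists ((1 - ga) / be), 1. unfold Qf.
    replace (0 * ((1 - ga) / be) ^ 2 + be * ((1 - ga) / be) * 1 + ga * 1 ^ 2) with 1
      by (field; auto). lra.
  - exists 1, 0. unfold Qf. lra.
Qed.

Lemma int_witness al be ga : be^2 - 4 * al * ga > 0 ->
  exists k l : Z, Qf al be ga (IZR k) (IZR l) > 0.
Proof. intros H. destruct (real_witness _ _ _ H) as [u [v Hu]]. eapply approx; eauto. Qed.

Lemma int_witness_neg al be ga : be^2 - 4 * al * ga > 0 ->
  exists k l : Z, Qf al be ga (IZR k) (IZR l) < 0.
Proof.
  intros H. destruct (int_witness (- al) (- be) (- ga)) as [k [l Hk]].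
  - replace ((- be)^2 - 4 * (- al) * (- ga)) with (be^2 - 4 * al * ga) by ring. lra.
  - exists k, l. unfold Qf in *. lra.
Qed.

Lemma dpl_local (g1 g2 : R -> R) x l d : 0 < d ->
  (forall z, Rabs (z - x) < d -> g1 z = g2 z) ->
  derivable_pt_lim g1 x l -> derivable_pt_lim g2 x l.
Proof.
  intros Hd Heq D eps He. destruct (D eps He) as [del Hdel].
  assert (Hm : 0 < Rmin del d) by (apply Rmin_pos; [apply cond_pos|lra]).
  exists (mkposreal _ Hm). simpl. intros h Hh Hlt.
  assert (h1 : Rabs h < del) by (eapply Rlt_le_trans; [exact Hlt|apply Rmin_l]).
  assert (h2 : Rabs h < d) by (eapply Rlt_le_trans; [exact Hlt|apply Rmin_r]).
  rewrite <- !Heq. apply Hdel; auto.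
  rewrite Rminus_diag, Rabs_R0; lra.
  replace (x + h - x) with h by ring; auto.
Qed.

Lemma int_open a b x y : interiorD a b x y -> exists d, 0 < d /\
  forall u v, Rabs (u - x) < d -> Rabs (v - y) < d -> interiorD a b u v.
Proof.
  intros [[H1 H2] [H3 H4]].
  exists (Rmin (Rmin x (a - x)) (Rmin y (b - y))). split.
  - repeat apply Rmin_pos; lra.
  - intros u v Hu Hv.
    pose proof (Rmin_l (Rmin x (a - x)) (Rmin y (b - y))).
    pose proof (Rmin_r (Rmin x (a - x)) (Rmin y (b - y))).
    pose proof (Rmin_l x (a - x)). pose proof (Rmin_r x (a - x)).
    pose proof (Rmin_l y (b - y)). pose proof (Rmin_r y (b - y)).
    apply Rabs_def2 in Hu. apply Rabs_def2 in Hv. unfold interiorD. lra.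
Qed.

Lemma eq_dx a b (F G Fd Gd : R -> R -> R) :
  (forall x y, interiorD a b x y -> F x y = G x y) ->
  (forall x y, interiorD a b x y -> derivable_pt_lim (fun t => F t y) x (Fd x y)) ->
  (forall x y, interiorD a b x y -> derivable_pt_lim (fun t => G t y) x (Gd x y)) ->
  forall x y, interiorD a b x y -> Fd x y = Gd x y.
Proof.
  intros HE HF HG x y Hi. destruct (int_open a b x y Hi) as [d [Hd Hop]].
  apply (uniqueness_limite (fun t => G t y) x).
  - apply (dpl_local (fun t => F t y) _ x _ d Hd); auto.
    intros z Hz. apply HE, Hop; auto. rewrite Rminus_diag, Rabs_R0; lra.
  - auto.
Qed.

Lemma eq_dy a b (F G Fd Gd : R -> R -> R) :
  (forall x y, interiorD a b x y -> F x y = G x y) ->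
  (forall x y, interiorD a b x y -> derivable_pt_lim (fun t => F x t) y (Fd x y)) ->
  (forall x y, interiorD a b x y -> derivable_pt_lim (fun t => G x t) y (Gd x y)) ->
  forall x y, interiorD a b x y -> Fd x y = Gd x y.
Proof.
  intros HE HF HG x y Hi. destruct (int_open a b x y Hi) as [d [Hd Hop]].
  apply (uniqueness_limite (fun t => G x t) y).
  - apply (dpl_local (fun t => F x t) _ y _ d Hd); auto.
    intros z Hz. apply HE, Hop; auto. rewrite Rminus_diag, Rabs_R0; lra.
  - auto.
Qed.

Definition cont_int a b (g : R -> R -> R) p1 p2 :=
  forall eps, 0 < eps -> exists d, 0 < d /\ forall u v, Rabs (u - p1) < d -> Rabs (v - p2) < d ->
    interiorD a b u v -> Rabs (g u v - g p1 p2) < eps.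

Lemma cont_transfer a b (g h : R -> R -> R) p1 p2 :
  interiorD a b p1 p2 -> (forall x y, interiorD a b x y -> g x y = h x y) ->
  cont2_at h p1 p2 -> cont_int a b g p1 p2.
Proof.
  intros Hp He Hc eps Heps. destruct (Hc eps Heps) as [d [Hd H]]. exists d; split; auto.
  intros u v Hu Hv Hi. rewrite !He; auto.
Qed.

Lemma Ck3_extract a b (f fx fy fxx fxy fyx fyy : R -> R -> R) p1 p2 :
  Ck 3 (interiorD a b) f -> interiorD a b p1 p2 ->
  (forall x y, interiorD a b x y -> derivable_pt_lim (fun t => f t y) x (fx x y)) ->
  (forall x y, interiorD a b x y -> derivable_pt_lim (fun t => f x t) y (fy x y)) ->
  (forall x y, interiorD a b x y -> derivable_pt_lim (fun t => fx t y) x (fxx x y)) ->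
  (forall x y, interiorD a b x y -> derivable_pt_lim (fun t => fx x t) y (fxy x y)) ->
  (forall x y, interiorD a b x y -> derivable_pt_lim (fun t => fy t y) x (fyx x y)) ->
  (forall x y, interiorD a b x y -> derivable_pt_lim (fun t => fy x t) y (fyy x y)) ->
  cont_int a b fxx p1 p2 /\ cont_int a b fxy p1 p2 /\ cont_int a b fyx p1 p2 /\ cont_int a b fyy p1 p2.
Proof.
  intros HC Hp Dx Dy Dxx Dxy Dyx Dyy.
  destruct HC as [_ [fx' [fy' [Dx' [Dy' [C2x C2y]]]]]].
  destruct C2x as [_ [g1 [g2 [Dg1 [Dg2 [C1g1 C1g2]]]]]].
  destruct C2y as [_ [h1 [h2 [Dh1 [Dh2 [C1h1 C1h2]]]]]].
  destruct C1g1 as [Cg1 _]. destruct C1g2 as [Cg2 _].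
  destruct C1h1 as [Ch1 _]. destruct C1h2 as [Ch2 _].
  assert (Ex : forall x y, interiorD a b x y -> fx x y = fx' x y).
  { apply (eq_dx a b f f); auto. }
  assert (Ey : forall x y, interiorD a b x y -> fy x y = fy' x y).
  { apply (eq_dy a b f f); auto. }
  split; [|split; [|split]].
  - apply (cont_transfer a b fxx g1); auto. apply (eq_dx a b fx fx'); auto.
  - apply (cont_transfer a b fxy g2); auto. apply (eq_dy a b fx fx'); auto.
  - apply (cont_transfer a b fyx h1); auto. apply (eq_dx a b fy fy'); auto.
  - apply (cont_transfer a b fyy h2); auto. apply (eq_dy a b fy fy'); auto.
Qed.

Lemma nb_idx a n i k : 0 < a -> (1 <= n)%nat ->
  0 < (INR i + IZR k) / INR n * a < a -> exists l, (l <= n)%nat /\ INR l = INR i + IZR k.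
Proof.
  intros Ha Hn [H1 H2].
  assert (Hn' : 0 < INR n) by (apply lt_0_INR; lia).
  set (X := INR i + IZR k) in *.
  assert (Hq : 0 < a / INR n) by (apply Rdiv_lt_0_compat; lra).
  assert (Eq : X / INR n * a = X * (a / INR n)) by (field; lra).
  rewrite Eq in H1, H2.
  assert (Eq2 : INR n * (a / INR n) = a) by (field; lra).
  assert (HX : 0 < X) by nra.
  assert (HXn : X < INR n) by nra.
  assert (Hz : IZR (Z.of_nat i + k) = X) by (unfold X; rewrite plus_IZR, <- INR_IZR_INZ; ring).
  assert (Hz0 : (0 < Z.of_nat i + k)%Z) by (apply lt_IZR; lra).
  exists (Z.to_nat (Z.of_nat i + k)).
  assert (HL : INR (Z.to_nat (Z.of_nat i + k)) = X).
  { rewrite INR_IZR_INZ, Z2Nat.id by lia. auto. }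
  split; auto.
  apply Nat.lt_le_incl. apply INR_lt. lra.
Qed.

Lemma dir_lemma a b (f fx fy fxx fxy fyx fyy : R -> R -> R) A B C D eps n i j k l r :
  0 < a -> 0 < b -> (1 <= n)%nat ->
  Rabs (IZR k) <= r -> Rabs (IZR l) <= r ->
  (forall x y, interiorD a b x y -> derivable_pt_lim (fun t => f t y) x (fx x y)) ->
  (forall x y, interiorD a b x y -> derivable_pt_lim (fun t => f x t) y (fy x y)) ->
  (forall x y, interiorD a b x y -> derivable_pt_lim (fun t => fx t y) x (fxx x y)) ->
  (forall x y, interiorD a b x y -> derivable_pt_lim (fun t => fx x t) y (fxy x y)) ->
  (forall x y, interiorD a b x y -> derivable_pt_lim (fun t => fy t y) x (fyx x y)) ->
  (forall x y, interiorD a b x y -> derivable_pt_lim (fun t => fy x t) y (fyy x y)) ->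
  (forall u v, Rabs (u - gridx a n i) <= Rabs (IZR k * a / INR n) ->
     Rabs (v - gridy b n j) <= Rabs (IZR l * b / INR n) ->
     interiorD a b u v /\ Rabs (fxx u v - A) <= eps /\ Rabs (fxy u v - B) <= eps /\
     Rabs (fyx u v - C) <= eps /\ Rabs (fyy u v - D) <= eps) ->
  exists l1 m1 l2 m2, in_grid_circle n r i j l1 m1 /\ in_grid_circle n r i j l2 m2 /\
    Rabs (f (gridx a n l1) (gridy b n m1) + f (gridx a n l2) (gridy b n m2)
          - 2 * f (gridx a n i) (gridy b n j)
          - Qf (A * a^2) ((B + C) * a * b) (D * b^2) (IZR k) (IZR l) / (INR n)^2)
    <= 3 * eps * (IZR k ^ 2 * a ^ 2 + IZR l ^ 2 * b ^ 2) / (INR n)^2.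
Proof.
  intros Ha Hb Hn Hk Hl Dx Dy Dxx Dxy Dyx Dyy Hbox.
  assert (Hn' : 0 < INR n) by (apply lt_0_INR; lia).
  set (x := gridx a n i) in *. set (y := gridy b n j) in *.
  set (s := IZR k * a / INR n) in *. set (t := IZR l * b / INR n) in *.
  pose proof (second_diff f fx fy fxx fxy fyx fyy A B C D eps x y s t) as SD.
  specialize (SD ltac:(intros u v Hu Hv; destruct (Hbox u v Hu Hv) as [Hi [? [? [? ?]]]];
     repeat split; auto)).
  assert (Hsx : Rabs (x + s - x) <= Rabs s) by (replace (x + s - x) with s by ring; lra).
  assert (Hty : Rabs (y + t - y) <= Rabs t) by (replace (y + t - y) with t by ring; lra).
  assert (Hsx' : Rabs (x - s - x) <= Rabs s) by (replace (x - s - x) with (- s) by ring; rewrite Rabs_Ropp; lra).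
  assert (Hty' : Rabs (y - t - y) <= Rabs t) by (replace (y - t - y) with (- t) by ring; rewrite Rabs_Ropp; lra).
  destruct (Hbox _ _ Hsx Hty) as [[[I1 I2] [I3 I4]] _].
  destruct (Hbox _ _ Hsx' Hty') as [[[J1 J2] [J3 J4]] _].
  assert (Ex1 : x + s = (INR i + IZR k) / INR n * a) by (unfold x, s, gridx; field; lra).
  assert (Ey1 : y + t = (INR j + IZR l) / INR n * b) by (unfold y, t, gridy; field; lra).
  assert (Ex2 : x - s = (INR i + IZR (- k)) / INR n * a) by (unfold x, s, gridx; rewrite opp_IZR; field; lra).
  assert (Ey2 : y - t = (INR j + IZR (- l)) / INR n * b) by (unfold y, t, gridy; rewrite opp_IZR; field; lra).
  destruct (nb_idx a n i k Ha Hn ltac:(rewrite <- Ex1; lra)) as [l1 [Hl1 El1]].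
  destruct (nb_idx b n j l Hb Hn ltac:(rewrite <- Ey1; lra)) as [m1 [Hm1 Em1]].
  destruct (nb_idx a n i (- k) Ha Hn ltac:(rewrite <- Ex2; lra)) as [l2 [Hl2 El2]].
  destruct (nb_idx b n j (- l) Hb Hn ltac:(rewrite <- Ey2; lra)) as [m2 [Hm2 Em2]].
  exists l1, m1, l2, m2.
  assert (G1 : gridx a n l1 = x + s) by (rewrite Ex1; unfold gridx; rewrite El1; reflexivity).
  assert (G2 : gridy b n m1 = y + t) by (rewrite Ey1; unfold gridy; rewrite Em1; reflexivity).
  assert (G3 : gridx a n l2 = x - s) by (rewrite Ex2; unfold gridx; rewrite El2; reflexivity).
  assert (G4 : gridy b n m2 = y - t) by (rewrite Ey2; unfold gridy; rewrite Em2; reflexivity).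
  rewrite opp_IZR in El2, Em2.
  split; [|split].
  - unfold in_grid_circle. split; [auto|split; [auto|]].
    rewrite El1, Em1. replace (INR i + IZR k - INR i) with (IZR k) by ring.
    replace (INR j + IZR l - INR j) with (IZR l) by ring. apply Rmax_lub; auto.
  - unfold in_grid_circle. split; [auto|split; [auto|]].
    rewrite El2, Em2. replace (INR i + - IZR k - INR i) with (- IZR k) by ring.
    replace (INR j + - IZR l - INR j) with (- IZR l) by ring. rewrite !Rabs_Ropp. apply Rmax_lub; auto.
  - rewrite G1, G2, G3, G4.
    replace (Qf (A * a ^ 2) ((B + C) * a * b) (D * b ^ 2) (IZR k) (IZR l) / INR n ^ 2)
      with (A * s ^ 2 + (B + C) * s * t + D * t ^ 2) by (unfold Qf, s, t; field; lra).
    replace (3 * eps * (IZR k ^ 2 * a ^ 2 + IZR l ^ 2 * b ^ 2) / INR n ^ 2)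
      with (3 * eps * (s ^ 2 + t ^ 2)) by (unfold s, t; field; lra).
    exact SD.
Qed.

Theorem theorem1 (a b : R) (f : R -> R -> R) (p1 p2 : R)
  (fx fy fxx fxy fyx fyy : R -> R -> R) :
  0 < a -> 0 < b ->
  Ck 3 (interiorD a b) f ->
  interiorD a b p1 p2 ->
  (forall x y, interiorD a b x y -> derivable_pt_lim (fun t => f t y) x (fx x y)) ->
  (forall x y, interiorD a b x y -> derivable_pt_lim (fun t => f x t) y (fy x y)) ->
  (forall x y, interiorD a b x y -> derivable_pt_lim (fun t => fx t y) x (fxx x y)) ->
  (forall x y, interiorD a b x y -> derivable_pt_lim (fun t => fx x t) y (fxy x y)) ->
  (forall x y, interiorD a b x y -> derivable_pt_lim (fun t => fy t y) x (fyx x y)) ->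
  (forall x y, interiorD a b x y -> derivable_pt_lim (fun t => fy x t) y (fyy x y)) ->
  fx p1 p2 = 0 -> fy p1 p2 = 0 ->
  fxx p1 p2 * fyy p1 p2 - fxy p1 p2 * fyx p1 p2 < 0 ->
  exists (U : R -> R -> Prop) (r : R),
    nbhd U p1 p2 /\ 0 < r /\
    exists N : nat, forall n : nat, (N <= n)%nat -> (1 <= n)%nat ->
      forall i j : nat, (i <= n)%nat -> (j <= n)%nat ->
        U (gridx a n i) (gridy b n j) ->
        ~ grid_minimal a b f n r i j /\ ~ grid_maximal a b f n r i j.
Proof.
  intros Ha Hb HC Hp Dx Dy Dxx Dxy Dyx Dyy _ _ Hdet.
  destruct (Ck3_extract a b f fx fy fxx fxy fyx fyy p1 p2 HC Hp Dx Dy Dxx Dxy Dyx Dyy)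
    as [Cxx [Cxy [Cyx Cyy]]].
  set (A := fxx p1 p2) in *. set (B := fxy p1 p2) in *.
  set (C := fyx p1 p2) in *. set (D := fyy p1 p2) in *.
  assert (Hdisc : ((B + C) * a * b) ^ 2 - 4 * (A * a ^ 2) * (D * b ^ 2) > 0).
  { replace (((B + C) * a * b) ^ 2 - 4 * (A * a ^ 2) * (D * b ^ 2))
      with ((a * b) ^ 2 * ((B - C) ^ 2 + 4 * (B * C - A * D))) by ring.
    apply Rmult_lt_0_compat.
    - apply pow_lt. apply Rmult_lt_0_compat; lra.
    - pose proof (pow2_ge_0 (B - C)). lra. }
  destruct (int_witness _ _ _ Hdisc) as [k1 [l1 HQ1]].
  destruct (int_witness_neg _ _ _ Hdisc) as [k2 [l2 HQ2]].
  set (Qf1 := Qf (A * a ^ 2) ((B + C) * a * b) (D * b ^ 2) (IZR k1) (IZR l1)) in *.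
  set (Qf2 := Qf (A * a ^ 2) ((B + C) * a * b) (D * b ^ 2) (IZR k2) (IZR l2)) in *.
  set (m := Rmin Qf1 (- Qf2)).
  assert (Hm : 0 < m) by (apply Rmin_pos; lra).
  assert (Hm1 : m <= Qf1) by apply Rmin_l.
  assert (Hm2 : m <= - Qf2) by apply Rmin_r.
  set (X1 := IZR k1 ^ 2 * a ^ 2 + IZR l1 ^ 2 * b ^ 2).
  set (X2 := IZR k2 ^ 2 * a ^ 2 + IZR l2 ^ 2 * b ^ 2).
  assert (HX1 : 0 <= X1) by (unfold X1; pose proof (pow2_ge_0 (IZR k1)); pose proof (pow2_ge_0 (IZR l1));
     pose proof (pow2_ge_0 a); pose proof (pow2_ge_0 b); nra).
  assert (HX2 : 0 <= X2) by (unfold X2; pose proof (pow2_ge_0 (IZR k2)); pose proof (pow2_ge_0 (IZR l2));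
     pose proof (pow2_ge_0 a); pose proof (pow2_ge_0 b); nra).
  set (W := 1 + X1 + X2).
  set (eps := m / (4 * W)).
  assert (Heps : 0 < eps) by (unfold eps, W; apply Rdiv_lt_0_compat; lra).
  assert (HepsW : eps * (4 * W) = m) by (unfold eps, W; field; lra).
  assert (E1 : 3 * eps * X1 < m) by (unfold W in HepsW; nra).
  assert (E2 : 3 * eps * X2 < m) by (unfold W in HepsW; nra).
  destruct (Cxx eps Heps) as [dxx [Hdxx Bxx]].
  destruct (Cxy eps Heps) as [dxy [Hdxy Bxy]].
  destruct (Cyx eps Heps) as [dyx [Hdyx Byx]].
  destruct (Cyy eps Heps) as [dyy [Hdyy Byy]].
  destruct (int_open a b p1 p2 Hp) as [d0 [Hd0 Hop]].
  set (d1 := Rmin (Rmin dxx dxy) (Rmin (Rmin dyx dyy) d0)).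
  assert (Hd1 : 0 < d1) by (repeat apply Rmin_pos; lra).
  assert (Hd1s : d1 <= dxx /\ d1 <= dxy /\ d1 <= dyx /\ d1 <= dyy /\ d1 <= d0).
  { unfold d1. pose proof (Rmin_l (Rmin dxx dxy) (Rmin (Rmin dyx dyy) d0)).
    pose proof (Rmin_r (Rmin dxx dxy) (Rmin (Rmin dyx dyy) d0)).
    pose proof (Rmin_l dxx dxy). pose proof (Rmin_r dxx dxy).
    pose proof (Rmin_l (Rmin dyx dyy) d0). pose proof (Rmin_r (Rmin dyx dyy) d0).
    pose proof (Rmin_l dyx dyy). pose proof (Rmin_r dyx dyy). lra. }
  set (r := 1 + Rabs (IZR k1) + Rabs (IZR l1) + Rabs (IZR k2) + Rabs (IZR l2)).
  pose proof (Rabs_pos (IZR k1)). pose proof (Rabs_pos (IZR l1)).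
  pose proof (Rabs_pos (IZR k2)). pose proof (Rabs_pos (IZR l2)).
  assert (Hr : 0 < r) by (unfold r; lra).
  exists (fun x y => Rabs (x - p1) < d1 / 2 /\ Rabs (y - p2) < d1 / 2), r.
  split; [exists (d1 / 2); split; [lra|auto]|].
  split; [auto|].
  destruct (archimed_cor1 (d1 / (2 * r * (a + b)))) as [N [HN HN0]].
  { apply Rdiv_lt_0_compat; [lra|]. apply Rmult_lt_0_compat; [|lra]. lra. }
  exists N. intros n HNn Hn1 i j Hi Hj [HUx HUy].
  assert (HNr : 0 < INR N) by (apply lt_0_INR; lia).
  assert (Hnr : 0 < INR n) by (apply lt_0_INR; lia).
  assert (HinvN : / INR n <= / INR N) by (apply Rinv_le_contravar; auto; apply le_INR; auto).
  assert (Hsmall : r * (a + b) / INR n < d1 / 2).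
  { assert (Hrab : 0 < r * (a + b)) by (apply Rmult_lt_0_compat; lra).
    assert (r * (a + b) * / INR n < r * (a + b) * (d1 / (2 * r * (a + b)))).
    { apply Rmult_lt_compat_l; auto. lra. }
    replace (r * (a + b) * (d1 / (2 * r * (a + b)))) with (d1 / 2) in H3 by (field; lra).
    unfold Rdiv; lra. }
  assert (Hbox : forall k l : Z, Rabs (IZR k) <= r -> Rabs (IZR l) <= r ->
     forall u v, Rabs (u - gridx a n i) <= Rabs (IZR k * a / INR n) ->
     Rabs (v - gridy b n j) <= Rabs (IZR l * b / INR n) ->
     interiorD a b u v /\ Rabs (fxx u v - A) <= eps /\ Rabs (fxy u v - B) <= eps /\
     Rabs (fyx u v - C) <= eps /\ Rabs (fyy u v - D) <= eps).
  { intros k l Hk Hl u v Hu Hv.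
    assert (Hs : Rabs (IZR k * a / INR n) < d1 / 2).
    { unfold Rdiv. rewrite !Rabs_mult, (Rabs_right a), (Rabs_right (/ INR n)) by
        (apply Rle_ge; left; auto; apply Rinv_0_lt_compat; auto).
      assert (Rabs (IZR k) * a * / INR n <= r * (a + b) * / INR n).
      { apply Rmult_le_compat_r; [left; apply Rinv_0_lt_compat; auto|]. nra. }
      unfold Rdiv in Hsmall. lra. }
    assert (Ht : Rabs (IZR l * b / INR n) < d1 / 2).
    { unfold Rdiv. rewrite !Rabs_mult, (Rabs_right b), (Rabs_right (/ INR n)) by
        (apply Rle_ge; left; auto; apply Rinv_0_lt_compat; auto).
      assert (Rabs (IZR l) * b * / INR n <= r * (a + b) * / INR n).
      { apply Rmult_le_compat_r; [left; apply Rinv_0_lt_compat; auto|]. nra. }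
      unfold Rdiv in Hsmall. lra. }
    assert (Hu1 : Rabs (u - p1) < d1).
    { replace (u - p1) with ((u - gridx a n i) + (gridx a n i - p1)) by ring.
      eapply Rle_lt_trans; [apply Rabs_triang|]. lra. }
    assert (Hv1 : Rabs (v - p2) < d1).
    { replace (v - p2) with ((v - gridy b n j) + (gridy b n j - p2)) by ring.
      eapply Rle_lt_trans; [apply Rabs_triang|]. lra. }
    assert (Hin : interiorD a b u v) by (apply Hop; lra).
    repeat split; try (apply Hin); left.
    - apply Bxx; auto; lra.
    - apply Bxy; auto; lra.
    - apply Byx; auto; lra.
    - apply Byy; auto; lra. }
  assert (Hn2 : 0 < INR n ^ 2) by (apply pow_lt; auto).
  split.
  - intro Hmin.
    assert (Hk : Rabs (IZR k2) <= r) by (unfold r; lra).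
    assert (Hl : Rabs (IZR l2) <= r) by (unfold r; lra).
    destruct (dir_lemma a b f fx fy fxx fxy fyx fyy A B C D eps n i j k2 l2 r Ha Hb Hn1 Hk Hl
       Dx Dy Dxx Dxy Dyx Dyy (Hbox k2 l2 Hk Hl)) as [q1 [q2 [q3 [q4 [C1 [C2 Hest]]]]]].
    pose proof (Hmin _ _ C1). pose proof (Hmin _ _ C2).
    apply Rabs_le_between in Hest. fold Qf2 in Hest. fold X2 in Hest.
    assert (Hneg : Qf2 / INR n ^ 2 + 3 * eps * X2 / INR n ^ 2 < 0).
    { replace (Qf2 / INR n ^ 2 + 3 * eps * X2 / INR n ^ 2) with ((Qf2 + 3 * eps * X2) * / INR n ^ 2)
        by (field; lra).
      assert (0 < / INR n ^ 2) by (apply Rinv_0_lt_compat; auto). nra. }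
    lra.
  - intro Hmax.
    assert (Hk : Rabs (IZR k1) <= r) by (unfold r; lra).
    assert (Hl : Rabs (IZR l1) <= r) by (unfold r; lra).
    destruct (dir_lemma a b f fx fy fxx fxy fyx fyy A B C D eps n i j k1 l1 r Ha Hb Hn1 Hk Hl
       Dx Dy Dxx Dxy Dyx Dyy (Hbox k1 l1 Hk Hl)) as [q1 [q2 [q3 [q4 [C1 [C2 Hest]]]]]].
    pose proof (Hmax _ _ C1). pose proof (Hmax _ _ C2).
    apply Rabs_le_between in Hest. fold Qf1 in Hest. fold X1 in Hest.
    assert (Hpos : Qf1 / INR n ^ 2 - 3 * eps * X1 / INR n ^ 2 > 0).
    { replace (Qf1 / INR n ^ 2 - 3 * eps * X1 / INR n ^ 2) with ((Qf1 - 3 * eps * X1) * / INR n ^ 2)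
        by (field; lra).
      assert (0 < / INR n ^ 2) by (apply Rinv_0_lt_compat; auto). nra. }
    lra.
Qed.
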